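(* Let $q\ge 2$, $t\ge 2$ and $s\ge 1$ be integers. Then (2) $K_{q}^{RT}((t-1)q,s,(t-1)qs-t)\le K_{q}((t-1)q,(t-1)q-t)$; (3) $K_{q}^{RT}((t-1)q,s,(t-1)qs-t)\le q-2+CAN(t,(t-1)q,2)$.
   Context: For positive integers $m,s$, the RT poset $[m\times s]$ is the set $\{1,\ldots,ms\}$ partitioned into $m$ blocks $B_i=\{is+1,\ldots,(i+1)s\}$; each block is a chain under the usual order of the integers, and elements of different blocks are incomparable. An ideal is a subset $I$ such that $b\in I$ and $a\preceq b$ imply $a\in I$; $\langle A\rangle$ denotes the smallest ideal containing $A$. For $x,y\in\mathbb{Z}_q^{ms}$, the RT distance is $d_{RT}(x,y)=|\langle\{i:x_i\neq y_i\}\rangle|$. A code $C\subseteq \mathbb{Z}_q^{ms}$ is an $R$-covering if for every $x\in\mathbb{Z}_q^{ms}$ there is $c\in C$ with $d_{RT}(x,c)\le R$; $K_q^{RT}(m,s,R)$ is the smallest size of an $R$-covering. $K_q(n,R)=K_q^{RT}(n,1,R)$ is the classical Hamming covering number. A covering array $CA(N;t,n,v)$ ($2\le t\le n$) is an $N\times n$ array over an alphabet of size $v$ in which, for every set of $t$ columns, every $t$-tuple over the alphabet appears as a row of the corresponding $N\times t$ subarray; $CAN(t,n,v)$ is the least such $N$. *)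

(* Defs.v *)
From mathcomp Require Import all_boot.
Set Implicit Arguments. Unset Strict Implicit. Unset Printing Implicit Defensive.

(* Coordinates of Z_q^{ms} are indexed 0-based by 'I_(m*s); the alphabet
   Z_q is represented by 'I_q (only equality of symbols matters). *)
Definition word (q m s : nat) := {ffun 'I_(m * s) -> 'I_q}.

(* RT order: a, b comparable iff in the same block (a %/ s = b %/ s),
   and then ordered as integers. Block i = {i*s, ..., i*s + s - 1}. *)
Definition rt_le (s : nat) (a b : nat) : bool := (a %/ s == b %/ s) && (a <= b).

Definition rt_ideal (m s : nat) (A : {set 'I_(m * s)}) : {set 'I_(m * s)} :=
  [set a : 'I_(m * s) | [exists b in A, rt_le s a b]].

Definition supp (q m s : nat) (x y : word q m s) : {set 'I_(m * s)} :=
  [set i | x i != y i].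

Definition dRT (q m s : nat) (x y : word q m s) : nat := #|rt_ideal (supp x y)|.

Definition is_covering (q m s R : nat) (C : {set word q m s}) : bool :=
  [forall x : word q m s, [exists c in C, dRT x c <= R]].

Definition has_covering_of_size (q m s R : nat) : pred nat :=
  fun N => [exists C : {set word q m s}, (#|C| == N) && is_covering R C].

Lemma has_covering_ex (q m s R : nat) : exists N, has_covering_of_size q m s R N.
Proof.
exists #|[set: word q m s]|; apply/existsP; exists [set: word q m s].
rewrite eqxx /=; apply/forallP => x; apply/existsP; exists x.
rewrite in_setT /= /dRT /supp.
have -> : [set i | x i != x i] = set0 by apply/setP => i; rewrite !inE eqxx.
have -> : rt_ideal (m:=m) (s:=s) set0 = set0.
  by apply/setP => a; rewrite !inE; apply/existsP => -[b]; rewrite inE.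
by rewrite cards0.
Qed.

Definition K_RT (q m s R : nat) : nat := ex_minn (has_covering_ex q m s R).

Definition K_H (q n R : nat) : nat := K_RT q n 1 R.

(* covering array CA(N; t, n, v): rows A r, r < N, each a word of length n
   over an alphabet of size v; every t-tuple on every t-set of columns T
   appears (a t-tuple on T is given as a function f agreeing on T). *)
Definition is_covering_array (N t n v : nat)
    (A : {ffun 'I_N -> {ffun 'I_n -> 'I_v}}) : bool :=
  [forall T : {set 'I_n}, (#|T| == t) ==>
     [forall f : {ffun 'I_n -> 'I_v}, [exists r : 'I_N, [forall j in T, A r j == f j]]]].

Definition has_CA (t n v : nat) : pred nat :=
  fun N => [exists A : {ffun 'I_N -> {ffun 'I_n -> 'I_v}}, is_covering_array t A].

Lemma has_CA_ex (t n v : nat) : exists N, has_CA t n v N.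
Proof.
exists #|{ffun 'I_n -> 'I_v}|; apply/existsP.
exists [ffun r => enum_val r]; apply/forallP => T; apply/implyP => _.
apply/forallP => f; apply/existsP; exists (enum_rank f).
by apply/forallP => j; apply/implyP => _; rewrite ffunE enum_rankK.
Qed.

Definition CAN (t n v : nat) : nat := ex_minn (has_CA_ex t n v).

(* Main.v *)
Require Import Defs.
From mathcomp Require Import all_boot zify.

Lemma blk_lt (n s : nat) (k : 'I_(n * s)) : k %/ s < n.
Proof.
case: s k => [|s] k; first by have := ltn_ord k; move: (nat_of_ord k); rewrite muln0.
by rewrite ltn_divLR.
Qed.

Definition blk (n s : nat) (k : 'I_(n * s)) : 'I_n := Ordinal (@blk_lt n s k).

Lemma key (q n s t : nat) (hs : 0 < s) (W : {set {ffun 'I_n -> 'I_q}}) :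
  (forall y : {ffun 'I_n -> 'I_q}, exists2 c, c \in W & t <= #|[set i | y i == c i]|) ->
  K_RT q n s (n * s - t) <= #|W|.
Proof.
move=> HW.
have lp_lt (i : 'I_n) : i * s + s.-1 < n * s.
  have := ltn_ord i; move: (nat_of_ord i) => j hj.
  have : j.+1 * s <= n * s by rewrite leq_mul2r hj orbT.
  rewrite mulSn; have := prednK hs; move: (s.-1) (j * s) (n * s) => u P N; lia.
pose lp (i : 'I_n) : 'I_(n * s) := Ordinal (lp_lt i).
have lp_inj : injective lp.
  move=> i j /(congr1 val) /= /eqP; rewrite eqn_add2r eqn_pmul2r // => /eqP h.
  exact: val_inj.
have lp_div (i : 'I_n) : lp i %/ s = i.
  by rewrite /= divnMDl // divn_small ?addn0 // prednK.
pose emb (c : {ffun 'I_n -> 'I_q}) : word q n s := [ffun k : 'I_(n * s) => c (@blk n s k)].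
have cov : has_covering_of_size q n s (n * s - t) #|emb @: W|.
  apply/existsP; exists (emb @: W); rewrite eqxx /=.
  apply/forallP => x; apply/existsP.
  have [c cW hc] := HW [ffun i => x (lp i)].
  exists (emb c); rewrite imset_f //=.
  set T := [set i | _ == _] in hc.
  have sub : rt_ideal (supp x (emb c)) \subset ~: (lp @: T).
    apply/subsetP => a; rewrite !inE => /existsP [b /andP [] ].
    rewrite inE ffunE => hb /andP [/eqP hab hle].
    apply/imsetP => -[i]; rewrite inE ffunE => /eqP hi ea.
    have hb1 : b %/ s = i by rewrite -hab ea lp_div.
    have e1 := divn_eq b s; have e2 := ltn_pmod b hs.
    have hba : b = lp i :> nat.
      move: hle; rewrite ea /= => hle; rewrite hb1 in e1. have := prednK hs. move: (s.-1) (b %% s) (i * s) (nat_of_ord b) e1 e2 hle => u r P B; lia.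
    have : b = lp i by apply: val_inj.
    move=> ebi; move: hb; rewrite ebi hi.
    have -> : @blk n s (lp i) = i by apply: val_inj; rewrite /= lp_div.
    by rewrite eqxx.
  rewrite /dRT; apply: (leq_trans (subset_leq_card sub)).
  have := cardsC (lp @: T); rewrite card_imset // card_ord; move: (#|T|) (#|~: lp @: T|) hc => k1 k2; lia.
rewrite /K_RT; case: ex_minnP => m _ /(_ _ cov) hm.
by apply: (leq_trans hm); apply: leq_imset_card.
Qed.

Lemma count_bound (n : nat) (f : 'I_n -> nat) (Q c : nat) :
  (forall k, k < Q -> #|[set i | f i == k]| <= c) -> #|[set i | f i < Q]| <= Q * c.
Proof.
elim: Q => [|Q IH] H.
  have -> : [set i | f i < 0] = set0 by apply/setP => i; rewrite !inE ltn0.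
  by rewrite cards0.
have -> : [set i | f i < Q.+1] = [set i | f i < Q] :|: [set i | f i == Q].
  by apply/setP => i; rewrite !inE ltnS leq_eqVlt orbC.
have h1 := IH (fun k hk => H k (ltnW hk)).
have h2 := H Q (ltnSn Q).
have := cardsUI [set i | f i < Q] [set i | f i == Q].
rewrite mulSn; lia.
Qed.

Theorem theorem2 (q t s : nat) (hq : 2 <= q) (ht : 2 <= t) (hs : 1 <= s) :
  K_RT q ((t - 1) * q) s ((t - 1) * q * s - t)
    <= K_H q ((t - 1) * q) ((t - 1) * q - t)
  /\
  K_RT q ((t - 1) * q) s ((t - 1) * q * s - t)
    <= q - 2 + CAN t ((t - 1) * q) 2.
Proof.
have htn : t <= (t - 1) * q.
  have : (t - 1) * 2 <= (t - 1) * q by rewrite leq_mul2l hq orbT.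
  lia.
move: htn; set n := (t - 1) * q => htn.
have en : n = (t - 1) * q by [].
split.
  set N := K_H q n (n - t).
  have : has_covering_of_size q n 1 (n - t) N.
    by rewrite /N /K_H /K_RT; case: ex_minnP.
  move/existsP => [C /andP [/eqP cardC /forallP cov]].
  pose W := [set [ffun i : 'I_n => c (cast_ord (esym (muln1 n)) i)] | c : word q n 1 in C].
  apply: (leq_trans (@key q n s t hs W _)); last first.
    by rewrite -cardC; apply: leq_imset_card.
  move=> y.
  pose x : word q n 1 := [ffun k : 'I_(n * 1) => y (cast_ord (muln1 n) k)].
  have /existsP [c /andP [cC hc]] := cov x.
  exists [ffun i : 'I_n => c (cast_ord (esym (muln1 n)) i)]; first by rewrite imset_f.
  have ssub : supp x c \subset rt_ideal (supp x c).
    apply/subsetP => a ha; rewrite inE; apply/existsP; exists a.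
    by rewrite ha /rt_le eqxx leqnn.
  have hsupp := leq_trans (subset_leq_card ssub) hc.
  have sub2 : [set (cast_ord (muln1 n) k : 'I_n) | k in ~: supp x c] \subset
              [set i | y i == [ffun i : 'I_n => c (cast_ord (esym (muln1 n)) i)] i].
    apply/subsetP => i /imsetP [k]; rewrite in_setC /supp in_set negbK => /eqP hk ->; rewrite in_set.
    rewrite ffunE.
    have -> : cast_ord (esym (muln1 n)) (cast_ord (muln1 n) k) = k by apply: val_inj.
    by rewrite -hk ffunE.
  apply: leq_trans (subset_leq_card sub2).
  rewrite card_imset; last by move=> a b /(congr1 val) /= h; apply: val_inj.
  have := cardsC (supp x c); rewrite card_ord.
  move: (#|supp x c|) (#|~: supp x c|) hsupp => a b; rewrite muln1; lia.
case: q hq n en htn => [|[|q']] // _ n en htn.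
rewrite subn2 /=.
set N := CAN t n 2.
have : has_CA t n 2 N by rewrite /N /CAN; case: ex_minnP.
move/existsP => [A /forallP CA].
pose W1 := [set [ffun _ : 'I_n => (inord k : 'I_q'.+2)] | k : 'I_q'].
pose W2 := [set [ffun j : 'I_n => (inord (q' + A r j) : 'I_q'.+2)] | r : 'I_N].
apply: (leq_trans (@key q'.+2 n s t hs (W1 :|: W2) _)).
  move=> y.
  case: (boolP [exists k : 'I_q', t <= #|[set i | val (y i) == val k]|]).
    move/existsP => [k hk].
    exists [ffun _ : 'I_n => (inord k : 'I_q'.+2)].
      by rewrite inE; apply/orP; left; rewrite imset_f.
    apply: leq_trans hk _; apply: subset_leq_card; apply/subsetP => i.
    rewrite !inE ffunE => /eqP hi; apply/eqP; apply: val_inj.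
    rewrite hi; apply/esym/inordK; have := ltn_ord k; lia.
  move/existsPn => hno.
  have hcnt : #|[set i | (y i : nat) < q']| <= q' * (t - 1).
    apply: count_bound => k hk.
    have h' : #|[set i | (y i : nat) == k]| < t by rewrite ltnNge; exact: hno (Ordinal hk).
    lia.
  set L := [set i | (y i : nat) < q'] in hcnt.
  have hS : t <= #|~: L|.
    have := cardsC L; rewrite card_ord.
    move: (#|L|) (#|~: L|) hcnt => a b; rewrite en; nia.
  have [sq [uq sz ssub]] := card_geqP hS.
  pose T := [set j in sq].
  have cT : #|T| == t by rewrite cardsE (card_uniqP uq) sz.
  pose f : {ffun 'I_n -> 'I_2} := [ffun j => inord (y j - q')].
  have /implyP /(_ cT) /forallP /(_ f) /existsP [r hr] := CA T.
  exists [ffun j : 'I_n => (inord (q' + A r j) : 'I_q'.+2)].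
    by rewrite inE; apply/orP; right; rewrite imset_f.
  rewrite -(eqP cT).
  apply: subset_leq_card; apply/subsetP => j hj.
  have hjs : j \in sq by move: hj; rewrite inE.
  have := ssub j hjs; rewrite !inE -leqNgt => hyj.
  have /forallP /(_ j) /implyP /(_ hj) /eqP hA := hr.
  rewrite ffunE hA ffunE; apply/eqP; apply: val_inj.
  have hy2 := ltn_ord (y j).
  have e1 : ((inord (y j - q') : 'I_2) : nat) = y j - q' by rewrite inordK; lia.
  have e2 : ((inord (q' + (inord (y j - q') : 'I_2)) : 'I_q'.+2) : nat) = y j.
    by rewrite e1 inordK; lia.
  by rewrite /= e2.
have := cardsUI W1 W2.
have h1 : #|W1| <= q' by rewrite -[q' in _ <= q']card_ord leq_imset_card.
have h2 : #|W2| <= N by rewrite -[N in _ <= N]card_ord leq_imset_card.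
move: (#|W1 :|: W2|) (#|W1 :&: W2|) (#|W1|) (#|W2|) h1 h2 => a b c d; lia.
Qed.
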